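(* Consider, in the Cartesian plane, two attackers $A1$, $A2$ and two targets $T1$, $T2$, each moving with constant speed along a straight line. The attackers have equal speed $v_{A1}=v_{A2}$, the targets have equal speed $v_{T1}=v_{T2}$, and the targets are slower than the attackers. The coordinate frame is chosen so that the $x$-axis is the line through the positions of $A1$ and $A2$ and the $y$-axis is the perpendicular bisector of the segment $\overline{A1A2}$; in particular $y_{A1}=y_{A2}=0$. Attacker $A1$ pursues $T1$ and $A2$ pursues $T2$, with $x_{T1}>0$ and $x_{T2}<0$. Let $\gamma_{A2T2}=v_{T2}/v_{A2}$ and let the $A2$–$T2$ Apollonius circle be the circle with center $$\left(\frac{x_{T2}-\gamma_{A2T2}^2x_{A2}}{1-\gamma_{A2T2}^2},\ \frac{y_{T2}}{1-\gamma_{A2T2}^2}\right)$$ and radius $$\frac{\gamma_{A2T2}\sqrt{(x_{T2}-x_{A2})^2+y_{T2}^2}}{1-\gamma_{A2T2}^2}.$$ Then the attacker $A1$ will collide with the attacker $A2$ only if the $A2$–$T2$ Apollonius circle intercepts the $y$-axis.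
   Context: This is a pursuit–evasion game between two targets and two attackers. Each attacker individually pursues its designated target, and the two targets cooperate to try to make the attackers collide with each other. The $A2$–$T2$ Apollonius circle is the locus of points that $A2$ and $T2$ can reach simultaneously when both move at constant speed in straight lines. The $y$-axis of the chosen frame is the locus of points that $A1$ and $A2$ can reach simultaneously. *)

(* Defs.v *)
From Stdlib Require Import Reals Lra.
Open Scope R_scope.

Definition moving (p0 : R * R) (s : R) (u : R * R) (t : R) : R * R :=
  (fst p0 + s * t * fst u, snd p0 + s * t * snd u).

Definition unit_dir (u : R * R) : Prop := fst u ^ 2 + snd u ^ 2 = 1.

Definition gamma (vT vA : R) : R := vT / vA.

(* Center and radius of the A-T Apollonius circle (A on the x-axis at xA). *)
Definition apollo_center (xA xT yT g : R) : R * R :=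
  ((xT - g ^ 2 * xA) / (1 - g ^ 2), yT / (1 - g ^ 2)).

Definition apollo_radius (xA xT yT g : R) : R :=
  g * sqrt ((xT - xA) ^ 2 + yT ^ 2) / (1 - g ^ 2).

Definition meets_y_axis (c : R * R) (r : R) : Prop :=
  exists y : R, (0 - fst c) ^ 2 + (y - snd c) ^ 2 = r ^ 2.

(* Main.v *)
Require Import Defs.
From Stdlib Require Import Reals.
From Stdlib Require Import Lra Psatz.
Open Scope R_scope.

Theorem lemma3 (a vA vT xT1 yT1 xT2 yT2 : R) (uA1 uA2 uT1 uT2 : R * R)
  (tau1 tau2 : R) :
  0 < a ->                      (* A1 = (a,0), A2 = (-a,0) *)
  0 < vT -> vT < vA ->          (* equal attacker speeds vA, equal target speeds vT *)
  0 < xT1 -> xT2 < 0 ->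
  unit_dir uA1 -> unit_dir uA2 -> unit_dir uT1 -> unit_dir uT2 ->
  0 < tau1 -> 0 < tau2 ->
  (* A1 pursues T1: straight-line interception at time tau1 *)
  moving (a, 0) vA uA1 tau1 = moving (xT1, yT1) vT uT1 tau1 ->
  (* A2 pursues T2: straight-line interception at time tau2 *)
  moving (- a, 0) vA uA2 tau2 = moving (xT2, yT2) vT uT2 tau2 ->
  (* A1 collides with A2 at time t, before either capture *)
  forall t : R, 0 <= t -> t <= tau1 -> t <= tau2 ->
  moving (a, 0) vA uA1 t = moving (- a, 0) vA uA2 t ->
  meets_y_axis (apollo_center (- a) xT2 yT2 (gamma vT vA))
               (apollo_radius (- a) xT2 yT2 (gamma vT vA)).
Proof.
  destruct uA1 as [p1 q1], uA2 as [p2 q2], uT2 as [wx wy].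
  unfold unit_dir, moving, meets_y_axis, apollo_center, apollo_radius, gamma; simpl.
  intros Ha HvT HvA HxT1 HxT2 U1 U2 _ W _ Ht2 _ H2 t Ht0 _ Htt2 Hc.
  injection H2 as H2x H2y. injection Hc as Hcx Hcy.
  assert (HvA0 : 0 < vA) by lra.
  assert (Htp : 0 < t).
  { destruct (Rle_lt_or_eq_dec 0 t Ht0) as [h|h]; auto. subst t. lra. }
  assert (Hq : q1 = q2).
  { apply Rmult_eq_reg_l with (vA * t). lra. apply Rgt_not_eq. nra. }
  assert (Hp2 : p2 = - p1 \/ p2 = p1).
  { assert (p2 * p2 = p1 * p1) by nra.
    assert ((p2 - p1) * (p2 + p1) = 0) by nra.
    destruct (Rmult_integral _ _ H0); [right|left]; lra. }
  assert (Hp : p2 = - p1).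
  { destruct Hp2 as [h|h]; auto. subst p2. lra. }
  subst p2.
  assert (Hx0 : 0 <= vA * t * (-p1) - a) by lra.
  assert (Hix : 0 <= - a + vA * tau2 * - p1).
  { assert (vA * t * (-p1) <= vA * tau2 * (-p1)).
    { assert (0 < -p1).
      { destruct (Rlt_le_dec 0 (-p1)) as [h|h]; auto.
        assert (0 <= vA * t) by nra. assert (vA * t * (-p1) <= 0) by (rewrite <- (Rmult_0_r (vA*t)); apply Rmult_le_compat_l; lra). lra. }
      apply Rmult_le_compat_r; nra. }
    lra. }
  set (g := vT / vA).
  assert (Hg : g * vA = vT) by (unfold g; field; lra).
  assert (Hg0 : 0 < g) by (unfold g; apply Rdiv_lt_0_compat; lra).
  assert (Hg1 : g < 1).
  { unfold g. apply (Rmult_lt_reg_r vA). lra. field_simplify; lra. }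
  set (k := 1 - g ^ 2).
  assert (Hk : 0 < k) by (unfold k; nra).
  set (ix := - a + vA * tau2 * - p1). set (iy := 0 + vA * tau2 * q1).
  set (G := fun x y => (x - xT2)^2 + (y - yT2)^2 - g^2 * ((x + a)^2 + y^2)).
  assert (GI : G ix iy = 0).
  { unfold G, ix, iy. rewrite Hq.
    assert (E1 : - a + vA * tau2 * - p1 - xT2 = g * vA * tau2 * wx) by (rewrite Hg; lra).
    assert (E2 : 0 + vA * tau2 * q2 - yT2 = g * vA * tau2 * wy) by (rewrite Hg; lra).
    assert (E3 : - a + vA * tau2 * - p1 + a = vA * tau2 * - p1) by ring.
    assert (E4 : 0 + vA * tau2 * q2 = vA * tau2 * q2) by ring.
    rewrite E1, E2, E3, E4.
    replace ((g * vA * tau2 * wx) ^ 2 + (g * vA * tau2 * wy) ^ 2)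
      with ((g*vA*tau2)^2 * (wx^2+wy^2)) by ring.
    replace ((vA * tau2 * - p1) ^ 2 + (vA * tau2 * q2) ^ 2)
      with ((vA*tau2)^2 * ((-p1)^2+q2^2)) by ring.
    replace (wx^2+wy^2) with 1 by (simpl; lra).
    replace ((-p1)^2 + q2^2) with 1 by (simpl; rewrite <- Hq; lra). ring. }
  set (D := (xT2 - - a) ^ 2 + yT2 ^ 2).
  set (lam := - xT2 / (ix - xT2)).
  assert (Hden : 0 < ix - xT2) by (unfold ix; lra).
  assert (Hl0 : 0 < lam) by (unfold lam; apply Rdiv_lt_0_compat; lra).
  assert (Hl1 : lam <= 1).
  { unfold lam. apply (Rmult_le_reg_r (ix - xT2)); auto. unfold Rdiv. rewrite Rmult_assoc, Rinv_l by lra. unfold ix; lra. }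
  set (qy := yT2 + lam * (iy - yT2)).
  assert (Hqx : xT2 + lam * (ix - xT2) = 0) by (unfold lam; field; lra).
  assert (GQ : G 0 qy <= 0).
  { assert (E : G 0 qy = (1 - lam) * (- g^2 * D) + lam * G ix iy
                 - lam * (1 - lam) * k * ((ix - xT2)^2 + (iy - yT2)^2)).
    { rewrite <- Hqx. unfold G, qy, D, k. ring. }
    rewrite E, GI.
    assert (0 <= D) by (unfold D; apply Rplus_le_le_0_compat; apply pow2_ge_0).
    assert (0 <= (ix - xT2)^2 + (iy - yT2)^2) by (apply Rplus_le_le_0_compat; apply pow2_ge_0).
    assert (0 <= 1 - lam) by lra.
    assert (0 <= lam * (1 - lam) * k * ((ix - xT2)^2 + (iy - yT2)^2)).
    { apply Rmult_le_pos; [|auto]. apply Rmult_le_pos; [|lra]. nra. }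
    assert (0 <= (1 - lam) * (g^2 * D)) by (apply Rmult_le_pos; nra).
    lra. }
  assert (HD : 0 <= D) by (unfold D; apply Rplus_le_le_0_compat; apply pow2_ge_0).
  assert (Hr2 : (g * sqrt D / k) ^ 2 = g^2 * D / k^2).
  { unfold Rdiv. rewrite !Rpow_mult_distr. rewrite <- Rsqr_pow2 with (x := sqrt D).
    rewrite Rsqr_sqrt by auto. rewrite pow_inv. reflexivity. }
  fold k. fold D.
  set (cx := (xT2 - g ^ 2 * - a) / k). set (cy := yT2 / k).
  assert (Key : k * G 0 qy = (k * qy - yT2)^2 - k^2 * (g^2*D/k^2 - cx^2)).
  { unfold G, cx, D, k. field. fold k. lra. }
  assert (Hnn : 0 <= g^2*D/k^2 - cx^2).
  { assert (k * G 0 qy <= 0).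
    { assert (0 <= k * (- G 0 qy)) by (apply Rmult_le_pos; lra). lra. }
    assert (0 <= (k * qy - yT2)^2) by apply pow2_ge_0.
    assert (0 <= k^2 * (g^2*D/k^2 - cx^2)) by lra.
    assert (0 < k^2) by (apply pow_lt; lra).
    apply (Rmult_le_reg_l (k^2)); auto. rewrite Rmult_0_r. auto. }
  exists (cy + sqrt (g^2*D/k^2 - cx^2)).
  change ((0 - cx)^2 + (cy + sqrt (g^2*D/k^2 - cx^2) - cy)^2 = (g * sqrt D / k)^2).
  rewrite Hr2.
  replace (cy + sqrt (g ^ 2 * D / k ^ 2 - cx ^ 2) - cy) with (sqrt (g ^ 2 * D / k ^ 2 - cx ^ 2)) by ring.
  rewrite <- Rsqr_pow2 with (x := sqrt _). rewrite Rsqr_sqrt; auto. ring.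
Qed.
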